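(* $\operatorname{BSR}(5,3)\ge 9$. In particular, the biquadratic form \[P(\mathbf{x},\mathbf{y})=x_1^2y_1^2+x_1^2y_2^2+x_2^2y_1^2+x_2^2y_3^2+x_3^2y_2^2+x_3^2y_3^2+x_4^2y_1^2+x_5^2y_2^2+(x_1y_3+x_4y_2)^2\] on $\mathbb{R}^5\times\mathbb{R}^3$ has SOS rank $9$ (i.e., it cannot be written as a sum of fewer than 9 squares of bilinear forms).
   Context: An $m\times n$ biquadratic form is a polynomial $P(\mathbf{x},\mathbf{y})=\sum_{i,k=1}^m\sum_{j,l=1}^n a_{ijkl}x_ix_ky_jy_l$ with real coefficients, $\mathbf{x}\in\mathbb{R}^m$, $\mathbf{y}\in\mathbb{R}^n$. It is SOS if $P=\sum_{p=1}^r f_p^2$ for some real bilinear forms $f_p(\mathbf{x},\mathbf{y})=\sum_{i,j}c^{(p)}_{ij}x_iy_j$; the least such $r$ is the SOS rank $\operatorname{sos}(P)$. $\operatorname{BSR}(m,n)$ is the maximum of $\operatorname{sos}(P)$ over all $m\times n$ SOS biquadratic forms $P$. *)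

(* Defs.v *)
From Stdlib Require Import Rdefinitions.
From HB Require Import structures.
From mathcomp Require Import all_boot all_order all_algebra.
From mathcomp Require Import Rstruct.
Set Implicit Arguments. Unset Strict Implicit. Unset Printing Implicit Defensive.
Import Order.TTheory GRing.Theory Num.Theory.
Local Open Scope ring_scope.

(* Points of R^m are functions 'I_m -> R (indices 0..m-1 instead of 1..m). *)

Definition biquad (m n : nat) (a : 'I_m -> 'I_n -> 'I_m -> 'I_n -> R)
  (x : 'I_m -> R) (y : 'I_n -> R) : R :=
  \sum_(i < m) \sum_(j < n) \sum_(k < m) \sum_(l < n)
     a i j k l * x i * x k * y j * y l.

Definition bilin (m n : nat) (c : 'M[R]_(m, n)) (x : 'I_m -> R) (y : 'I_n -> R) : R :=
  \sum_(i < m) \sum_(j < n) c i j * x i * y j.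

Definition sos_with (m n r : nat) (P : ('I_m -> R) -> ('I_n -> R) -> R) : Prop :=
  exists c : 'I_r -> 'M[R]_(m, n),
    forall x y, P x y = \sum_(p < r) (bilin (c p) x y) ^+ 2.

Definition is_sos (m n : nat) (P : ('I_m -> R) -> ('I_n -> R) -> R) : Prop :=
  exists r, sos_with r P.

Definition sos_rank (m n : nat) (P : ('I_m -> R) -> ('I_n -> R) -> R) (r : nat) : Prop :=
  sos_with r P /\ forall r', (r' < r)%N -> ~ sos_with r' P.

Definition BSR_ge (m n k : nat) : Prop :=
  exists a : 'I_m -> 'I_n -> 'I_m -> 'I_n -> R,
    is_sos (biquad a) /\ forall r, (r < k)%N -> ~ sos_with r (biquad a).

Definition P53 (x : 'I_5 -> R) (y : 'I_3 -> R) : R :=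
  let x1 := x (inord 0) in let x2 := x (inord 1) in let x3 := x (inord 2) in
  let x4 := x (inord 3) in let x5 := x (inord 4) in
  let y1 := y (inord 0) in let y2 := y (inord 1) in let y3 := y (inord 2) in
  x1^+2 * y1^+2 + x1^+2 * y2^+2 + x2^+2 * y1^+2 + x2^+2 * y3^+2
  + x3^+2 * y2^+2 + x3^+2 * y3^+2 + x4^+2 * y1^+2 + x5^+2 * y2^+2
  + (x1 * y3 + x4 * y2)^+2.

(* Main.v *)
Require Import Defs.
From Stdlib Require Import Rdefinitions.
From HB Require Import structures.
From mathcomp Require Import all_boot all_order all_algebra.
From mathcomp Require Import Rstruct ring lra.
Import Order.TTheory GRing.Theory Num.Theory.
Local Open Scope ring_scope.

Notation i0 := (ord0 : 'I_5).
Notation i1 := (lift ord0 (ord0 : 'I_4) : 'I_5).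
Notation i2 := (lift ord0 (lift ord0 (ord0 : 'I_3)) : 'I_5).
Notation i3 := (lift ord0 (lift ord0 (lift ord0 (ord0 : 'I_2))) : 'I_5).
Notation i4 := (lift ord0 (lift ord0 (lift ord0 (lift ord0 (ord0 : 'I_1)))) : 'I_5).
Notation j0 := (ord0 : 'I_3).
Notation j1 := (lift ord0 (ord0 : 'I_2) : 'I_3).
Notation j2 := (lift ord0 (lift ord0 (ord0 : 'I_1)) : 'I_3).

Lemma bilinE (c : 'M[R]_(5,3)) x y : bilin c x y =
  c i0 j0 * x i0 * y j0 + c i0 j1 * x i0 * y j1 + c i0 j2 * x i0 * y j2 +
  c i1 j0 * x i1 * y j0 + c i1 j1 * x i1 * y j1 + c i1 j2 * x i1 * y j2 +
  c i2 j0 * x i2 * y j0 + c i2 j1 * x i2 * y j1 + c i2 j2 * x i2 * y j2 +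
  c i3 j0 * x i3 * y j0 + c i3 j1 * x i3 * y j1 + c i3 j2 * x i3 * y j2 +
  c i4 j0 * x i4 * y j0 + c i4 j1 * x i4 * y j1 + c i4 j2 * x i4 * y j2.
Proof. rewrite /bilin !big_ord_recl !big_ord0. ring. Qed.

Lemma P53E x y : P53 x y =
  x i0^+2 * y j0^+2 + x i0^+2 * y j1^+2 + x i1^+2 * y j0^+2 + x i1^+2 * y j2^+2
  + x i2^+2 * y j1^+2 + x i2^+2 * y j2^+2 + x i3^+2 * y j0^+2 + x i4^+2 * y j1^+2
  + (x i0 * y j2 + x i3 * y j1)^+2.
Proof.
have e1 : (inord 1 : 'I_5) = i1 by apply: val_inj; rewrite /= inordK.
have e2 : (inord 2 : 'I_5) = i2 by apply: val_inj; rewrite /= inordK.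
have e3 : (inord 3 : 'I_5) = i3 by apply: val_inj; rewrite /= inordK.
have e4 : (inord 4 : 'I_5) = i4 by apply: val_inj; rewrite /= inordK.
have e0 : (inord 0 : 'I_5) = i0 by apply: val_inj; rewrite /= inordK.
have f1 : (inord 1 : 'I_3) = j1 by apply: val_inj; rewrite /= inordK.
have f2 : (inord 2 : 'I_3) = j2 by apply: val_inj; rewrite /= inordK.
have f0 : (inord 0 : 'I_3) = j0 by apply: val_inj; rewrite /= inordK.
by rewrite /P53 e0 e1 e2 e3 e4 f0 f1 f2.
Qed.

Section Low.
Variable r : nat.
Variable c : 'I_r -> 'M[R]_(5,3).
Hypothesis H : forall x y, P53 x y = \sum_p (bilin (c p) x y)^+2.
Definition S i j k l := \sum_p c p i j * c p k l.

Lemma ptE (s t : seq R) (F : 'I_r -> R) :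
  (forall p, bilin (c p) (fun i => nth 0 s i) (fun j => nth 0 t j) = F p) ->
  P53 (fun i => nth 0 s i) (fun j => nth 0 t j) = \sum_p F p ^+2.
Proof. by move=> E; rewrite H; apply: eq_bigr => p _; rewrite E. Qed.

Lemma sq1 i j : \sum_p (c p i j)^+2 = S i j i j.
Proof. by apply: eq_bigr => p _; rewrite expr2. Qed.
Lemma sq2 i j k l : \sum_p (c p i j + c p k l)^+2 = S i j i j + 2 * S i j k l + S k l k l.
Proof. rewrite /S mulr_sumr -!big_split /=; apply: eq_bigr => p _; ring. Qed.
Lemma sq3 a b c' d e f : \sum_p (c p a b + c p c' d + c p e f)^+2 =
  S a b a b + S c' d c' d + S e f e f + 2 * S a b c' d + 2 * S a b e f + 2 * S c' d e f.
Proof. rewrite /S !mulr_sumr -!big_split /=; apply: eq_bigr => p _; ring. Qed.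
Lemma sq4 a b c' d e f g h : \sum_p (c p a b + c p c' d + c p e f + c p g h)^+2 =
  S a b a b + S c' d c' d + S e f e f + S g h g h + 2 * S a b c' d + 2 * S a b e f
  + 2 * S a b g h + 2 * S c' d e f + 2 * S c' d g h + 2 * S e f g h.
Proof. rewrite /S !mulr_sumr -!big_split /=; apply: eq_bigr => p _; ring. Qed.

Lemma zero_of i j : \sum_p (c p i j)^+2 = 0 -> forall p, c p i j = 0.
Proof.
move=> h p; have := psumr_eq0P (fun p _ => sqr_ge0 (c p i j)) h; move=> /(_ p isT).
by move/eqP; rewrite sqrf_eq0 => /eqP.
Qed.


Lemma zero_gen (F : 'I_r -> R) : \sum_p (F p)^+2 = 0 -> forall p, F p = 0.
Proof.
move=> h p; have := psumr_eq0P (fun p _ => sqr_ge0 (F p)) h; move=> /(_ p isT).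
by move/eqP; rewrite sqrf_eq0 => /eqP.
Qed.
Lemma sqdiff a b e f : \sum_p (c p a b - c p e f)^+2 = S a b a b - 2 * S a b e f + S e f e f.
Proof. rewrite /S mulr_sumr -sumrN -!big_split /=; apply: eq_bigr => p _; ring. Qed.
Lemma Ssym a b e f : S a b e f = S e f a b.
Proof. by apply: eq_bigr => p _; rewrite mulrC. Qed.
Definition RI : seq 'I_5 := [:: i0; i0; i0; i1; i1; i2; i2; i3; i4].
Definition CJ : seq 'I_3 := [:: j0; j1; j2; j0; j2; j1; j2; j0; j1].

Lemma lower : (9 <= r)%N.
Proof.
have Z11 : forall p, c p i1 j1 = 0.
{ have h := ptE [::0;1;0;0;0] [::0;1;0] (fun p => c p i1 j1) (fun p => ltac:(rewrite bilinE /=; ring)). rewrite P53E /= in h. apply: zero_of. rewrite -h. ring. }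
have Z20 : forall p, c p i2 j0 = 0.
{ have h := ptE [::0;0;1;0;0] [::1;0;0] (fun p => c p i2 j0) (fun p => ltac:(rewrite bilinE /=; ring)). rewrite P53E /= in h. apply: zero_of. rewrite -h. ring. }
have Z32 : forall p, c p i3 j2 = 0.
{ have h := ptE [::0;0;0;1;0] [::0;0;1] (fun p => c p i3 j2) (fun p => ltac:(rewrite bilinE /=; ring)). rewrite P53E /= in h. apply: zero_of. rewrite -h. ring. }
have Z40 : forall p, c p i4 j0 = 0.
{ have h := ptE [::0;0;0;0;1] [::1;0;0] (fun p => c p i4 j0) (fun p => ltac:(rewrite bilinE /=; ring)). rewrite P53E /= in h. apply: zero_of. rewrite -h. ring. }
have Z42 : forall p, c p i4 j2 = 0.
{ have h := ptE [::0;0;0;0;1] [::0;0;1] (fun p => c p i4 j2) (fun p => ltac:(rewrite bilinE /=; ring)). rewrite P53E /= in h. apply: zero_of. rewrite -h. ring. }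
have h1 := ptE [::1;0;0;0;0] [::1;0;0] (fun p => c p i0 j0) (fun p => ltac:(rewrite bilinE /= ?Z11 ?Z20 ?Z32 ?Z40 ?Z42; ring)).
rewrite P53E /= sq1 in h1.
have h2 := ptE [::1;0;0;0;0] [::0;1;0] (fun p => c p i0 j1) (fun p => ltac:(rewrite bilinE /= ?Z11 ?Z20 ?Z32 ?Z40 ?Z42; ring)).
rewrite P53E /= sq1 in h2.
have h3 := ptE [::1;0;0;0;0] [::0;0;1] (fun p => c p i0 j2) (fun p => ltac:(rewrite bilinE /= ?Z11 ?Z20 ?Z32 ?Z40 ?Z42; ring)).
rewrite P53E /= sq1 in h3.
have h4 := ptE [::0;1;0;0;0] [::1;0;0] (fun p => c p i1 j0) (fun p => ltac:(rewrite bilinE /= ?Z11 ?Z20 ?Z32 ?Z40 ?Z42; ring)).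
rewrite P53E /= sq1 in h4.
have h5 := ptE [::0;1;0;0;0] [::0;0;1] (fun p => c p i1 j2) (fun p => ltac:(rewrite bilinE /= ?Z11 ?Z20 ?Z32 ?Z40 ?Z42; ring)).
rewrite P53E /= sq1 in h5.
have h6 := ptE [::0;0;1;0;0] [::0;1;0] (fun p => c p i2 j1) (fun p => ltac:(rewrite bilinE /= ?Z11 ?Z20 ?Z32 ?Z40 ?Z42; ring)).
rewrite P53E /= sq1 in h6.
have h7 := ptE [::0;0;1;0;0] [::0;0;1] (fun p => c p i2 j2) (fun p => ltac:(rewrite bilinE /= ?Z11 ?Z20 ?Z32 ?Z40 ?Z42; ring)).
rewrite P53E /= sq1 in h7.
have h8 := ptE [::0;0;0;1;0] [::1;0;0] (fun p => c p i3 j0) (fun p => ltac:(rewrite bilinE /= ?Z11 ?Z20 ?Z32 ?Z40 ?Z42; ring)).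
rewrite P53E /= sq1 in h8.
have h9 := ptE [::0;0;0;1;0] [::0;1;0] (fun p => c p i3 j1) (fun p => ltac:(rewrite bilinE /= ?Z11 ?Z20 ?Z32 ?Z40 ?Z42; ring)).
rewrite P53E /= sq1 in h9.
have h10 := ptE [::0;0;0;0;1] [::0;1;0] (fun p => c p i4 j1) (fun p => ltac:(rewrite bilinE /= ?Z11 ?Z20 ?Z32 ?Z40 ?Z42; ring)).
rewrite P53E /= sq1 in h10.
have h11 := ptE [::1;0;0;0;0] [::1;1;0] (fun p => c p i0 j0 + c p i0 j1) (fun p => ltac:(rewrite bilinE /= ?Z11 ?Z20 ?Z32 ?Z40 ?Z42; ring)).
rewrite P53E /= sq2 in h11.
have h12 := ptE [::1;0;0;0;0] [::1;0;1] (fun p => c p i0 j0 + c p i0 j2) (fun p => ltac:(rewrite bilinE /= ?Z11 ?Z20 ?Z32 ?Z40 ?Z42; ring)).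
rewrite P53E /= sq2 in h12.
have h13 := ptE [::1;1;0;0;0] [::1;0;0] (fun p => c p i0 j0 + c p i1 j0) (fun p => ltac:(rewrite bilinE /= ?Z11 ?Z20 ?Z32 ?Z40 ?Z42; ring)).
rewrite P53E /= sq2 in h13.
have h14 := ptE [::1;0;0;1;0] [::1;0;0] (fun p => c p i0 j0 + c p i3 j0) (fun p => ltac:(rewrite bilinE /= ?Z11 ?Z20 ?Z32 ?Z40 ?Z42; ring)).
rewrite P53E /= sq2 in h14.
have h15 := ptE [::1;0;0;0;0] [::0;1;1] (fun p => c p i0 j1 + c p i0 j2) (fun p => ltac:(rewrite bilinE /= ?Z11 ?Z20 ?Z32 ?Z40 ?Z42; ring)).
rewrite P53E /= sq2 in h15.
have h16 := ptE [::1;0;1;0;0] [::0;1;0] (fun p => c p i0 j1 + c p i2 j1) (fun p => ltac:(rewrite bilinE /= ?Z11 ?Z20 ?Z32 ?Z40 ?Z42; ring)).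
rewrite P53E /= sq2 in h16.
have h17 := ptE [::1;0;0;1;0] [::0;1;0] (fun p => c p i0 j1 + c p i3 j1) (fun p => ltac:(rewrite bilinE /= ?Z11 ?Z20 ?Z32 ?Z40 ?Z42; ring)).
rewrite P53E /= sq2 in h17.
have h18 := ptE [::1;0;0;0;1] [::0;1;0] (fun p => c p i0 j1 + c p i4 j1) (fun p => ltac:(rewrite bilinE /= ?Z11 ?Z20 ?Z32 ?Z40 ?Z42; ring)).
rewrite P53E /= sq2 in h18.
have h19 := ptE [::1;1;0;0;0] [::0;0;1] (fun p => c p i0 j2 + c p i1 j2) (fun p => ltac:(rewrite bilinE /= ?Z11 ?Z20 ?Z32 ?Z40 ?Z42; ring)).
rewrite P53E /= sq2 in h19.
have h20 := ptE [::1;0;1;0;0] [::0;0;1] (fun p => c p i0 j2 + c p i2 j2) (fun p => ltac:(rewrite bilinE /= ?Z11 ?Z20 ?Z32 ?Z40 ?Z42; ring)).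
rewrite P53E /= sq2 in h20.
have h21 := ptE [::0;1;0;0;0] [::1;0;1] (fun p => c p i1 j0 + c p i1 j2) (fun p => ltac:(rewrite bilinE /= ?Z11 ?Z20 ?Z32 ?Z40 ?Z42; ring)).
rewrite P53E /= sq2 in h21.
have h22 := ptE [::0;1;0;1;0] [::1;0;0] (fun p => c p i1 j0 + c p i3 j0) (fun p => ltac:(rewrite bilinE /= ?Z11 ?Z20 ?Z32 ?Z40 ?Z42; ring)).
rewrite P53E /= sq2 in h22.
have h23 := ptE [::0;1;1;0;0] [::0;0;1] (fun p => c p i1 j2 + c p i2 j2) (fun p => ltac:(rewrite bilinE /= ?Z11 ?Z20 ?Z32 ?Z40 ?Z42; ring)).
rewrite P53E /= sq2 in h23.
have h24 := ptE [::0;0;1;0;0] [::0;1;1] (fun p => c p i2 j1 + c p i2 j2) (fun p => ltac:(rewrite bilinE /= ?Z11 ?Z20 ?Z32 ?Z40 ?Z42; ring)).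
rewrite P53E /= sq2 in h24.
have h25 := ptE [::0;0;1;1;0] [::0;1;0] (fun p => c p i2 j1 + c p i3 j1) (fun p => ltac:(rewrite bilinE /= ?Z11 ?Z20 ?Z32 ?Z40 ?Z42; ring)).
rewrite P53E /= sq2 in h25.
have h26 := ptE [::0;0;1;0;1] [::0;1;0] (fun p => c p i2 j1 + c p i4 j1) (fun p => ltac:(rewrite bilinE /= ?Z11 ?Z20 ?Z32 ?Z40 ?Z42; ring)).
rewrite P53E /= sq2 in h26.
have h27 := ptE [::0;0;0;1;0] [::1;1;0] (fun p => c p i3 j0 + c p i3 j1) (fun p => ltac:(rewrite bilinE /= ?Z11 ?Z20 ?Z32 ?Z40 ?Z42; ring)).
rewrite P53E /= sq2 in h27.
have h28 := ptE [::0;0;0;1;1] [::0;1;0] (fun p => c p i3 j1 + c p i4 j1) (fun p => ltac:(rewrite bilinE /= ?Z11 ?Z20 ?Z32 ?Z40 ?Z42; ring)).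
rewrite P53E /= sq2 in h28.
have h29 := ptE [::1;1;0;0;0] [::1;1;0] (fun p => c p i0 j0 + c p i0 j1 + c p i1 j0) (fun p => ltac:(rewrite bilinE /= ?Z11 ?Z20 ?Z32 ?Z40 ?Z42; ring)).
rewrite P53E /= sq3 in h29.
have h30 := ptE [::1;1;0;0;0] [::1;0;1] (fun p => c p i0 j0 + c p i0 j2 + c p i1 j0 + c p i1 j2) (fun p => ltac:(rewrite bilinE /= ?Z11 ?Z20 ?Z32 ?Z40 ?Z42; ring)).
rewrite P53E /= sq4 in h30.
have h31 := ptE [::1;1;0;0;0] [::0;1;1] (fun p => c p i0 j1 + c p i0 j2 + c p i1 j2) (fun p => ltac:(rewrite bilinE /= ?Z11 ?Z20 ?Z32 ?Z40 ?Z42; ring)).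
rewrite P53E /= sq3 in h31.
have h32 := ptE [::1;0;1;0;0] [::1;1;0] (fun p => c p i0 j0 + c p i0 j1 + c p i2 j1) (fun p => ltac:(rewrite bilinE /= ?Z11 ?Z20 ?Z32 ?Z40 ?Z42; ring)).
rewrite P53E /= sq3 in h32.
have h33 := ptE [::1;0;1;0;0] [::1;0;1] (fun p => c p i0 j0 + c p i0 j2 + c p i2 j2) (fun p => ltac:(rewrite bilinE /= ?Z11 ?Z20 ?Z32 ?Z40 ?Z42; ring)).
rewrite P53E /= sq3 in h33.
have h34 := ptE [::1;0;1;0;0] [::0;1;1] (fun p => c p i0 j1 + c p i0 j2 + c p i2 j1 + c p i2 j2) (fun p => ltac:(rewrite bilinE /= ?Z11 ?Z20 ?Z32 ?Z40 ?Z42; ring)).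
rewrite P53E /= sq4 in h34.
have h35 := ptE [::1;0;0;1;0] [::1;1;0] (fun p => c p i0 j0 + c p i0 j1 + c p i3 j0 + c p i3 j1) (fun p => ltac:(rewrite bilinE /= ?Z11 ?Z20 ?Z32 ?Z40 ?Z42; ring)).
rewrite P53E /= sq4 in h35.
have h36 := ptE [::1;0;0;1;0] [::1;0;1] (fun p => c p i0 j0 + c p i0 j2 + c p i3 j0) (fun p => ltac:(rewrite bilinE /= ?Z11 ?Z20 ?Z32 ?Z40 ?Z42; ring)).
rewrite P53E /= sq3 in h36.
have h37 := ptE [::1;0;0;1;0] [::0;1;1] (fun p => c p i0 j1 + c p i0 j2 + c p i3 j1) (fun p => ltac:(rewrite bilinE /= ?Z11 ?Z20 ?Z32 ?Z40 ?Z42; ring)).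
rewrite P53E /= sq3 in h37.
have h38 := ptE [::1;0;0;0;1] [::1;1;0] (fun p => c p i0 j0 + c p i0 j1 + c p i4 j1) (fun p => ltac:(rewrite bilinE /= ?Z11 ?Z20 ?Z32 ?Z40 ?Z42; ring)).
rewrite P53E /= sq3 in h38.
have h39 := ptE [::1;0;0;0;1] [::0;1;1] (fun p => c p i0 j1 + c p i0 j2 + c p i4 j1) (fun p => ltac:(rewrite bilinE /= ?Z11 ?Z20 ?Z32 ?Z40 ?Z42; ring)).
rewrite P53E /= sq3 in h39.
have h40 := ptE [::0;1;1;0;0] [::1;1;0] (fun p => c p i1 j0 + c p i2 j1) (fun p => ltac:(rewrite bilinE /= ?Z11 ?Z20 ?Z32 ?Z40 ?Z42; ring)).
rewrite P53E /= sq2 in h40.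
have h41 := ptE [::0;1;1;0;0] [::1;0;1] (fun p => c p i1 j0 + c p i1 j2 + c p i2 j2) (fun p => ltac:(rewrite bilinE /= ?Z11 ?Z20 ?Z32 ?Z40 ?Z42; ring)).
rewrite P53E /= sq3 in h41.
have h42 := ptE [::0;1;1;0;0] [::0;1;1] (fun p => c p i1 j2 + c p i2 j1 + c p i2 j2) (fun p => ltac:(rewrite bilinE /= ?Z11 ?Z20 ?Z32 ?Z40 ?Z42; ring)).
rewrite P53E /= sq3 in h42.
have h43 := ptE [::0;1;0;1;0] [::1;1;0] (fun p => c p i1 j0 + c p i3 j0 + c p i3 j1) (fun p => ltac:(rewrite bilinE /= ?Z11 ?Z20 ?Z32 ?Z40 ?Z42; ring)).
rewrite P53E /= sq3 in h43.
have h44 := ptE [::0;1;0;1;0] [::1;0;1] (fun p => c p i1 j0 + c p i1 j2 + c p i3 j0) (fun p => ltac:(rewrite bilinE /= ?Z11 ?Z20 ?Z32 ?Z40 ?Z42; ring)).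
rewrite P53E /= sq3 in h44.
have h45 := ptE [::0;1;0;1;0] [::0;1;1] (fun p => c p i1 j2 + c p i3 j1) (fun p => ltac:(rewrite bilinE /= ?Z11 ?Z20 ?Z32 ?Z40 ?Z42; ring)).
rewrite P53E /= sq2 in h45.
have h46 := ptE [::0;1;0;0;1] [::1;1;0] (fun p => c p i1 j0 + c p i4 j1) (fun p => ltac:(rewrite bilinE /= ?Z11 ?Z20 ?Z32 ?Z40 ?Z42; ring)).
rewrite P53E /= sq2 in h46.
have h47 := ptE [::0;1;0;0;1] [::0;1;1] (fun p => c p i1 j2 + c p i4 j1) (fun p => ltac:(rewrite bilinE /= ?Z11 ?Z20 ?Z32 ?Z40 ?Z42; ring)).
rewrite P53E /= sq2 in h47.
have h48 := ptE [::0;0;1;1;0] [::1;1;0] (fun p => c p i2 j1 + c p i3 j0 + c p i3 j1) (fun p => ltac:(rewrite bilinE /= ?Z11 ?Z20 ?Z32 ?Z40 ?Z42; ring)).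
rewrite P53E /= sq3 in h48.
have h49 := ptE [::0;0;1;1;0] [::1;0;1] (fun p => c p i2 j2 + c p i3 j0) (fun p => ltac:(rewrite bilinE /= ?Z11 ?Z20 ?Z32 ?Z40 ?Z42; ring)).
rewrite P53E /= sq2 in h49.
have h50 := ptE [::0;0;1;1;0] [::0;1;1] (fun p => c p i2 j1 + c p i2 j2 + c p i3 j1) (fun p => ltac:(rewrite bilinE /= ?Z11 ?Z20 ?Z32 ?Z40 ?Z42; ring)).
rewrite P53E /= sq3 in h50.
have h51 := ptE [::0;0;1;0;1] [::0;1;1] (fun p => c p i2 j1 + c p i2 j2 + c p i4 j1) (fun p => ltac:(rewrite bilinE /= ?Z11 ?Z20 ?Z32 ?Z40 ?Z42; ring)).
rewrite P53E /= sq3 in h51.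
have h52 := ptE [::0;0;0;1;1] [::1;1;0] (fun p => c p i3 j0 + c p i3 j1 + c p i4 j1) (fun p => ltac:(rewrite bilinE /= ?Z11 ?Z20 ?Z32 ?Z40 ?Z42; ring)).
rewrite P53E /= sq3 in h52.
have X1342 : S i0 j2 i3 j1 = 1 by clear -h2 h15 h17 h37; lra.
have W : forall p, c p i3 j1 = c p i0 j2.
{ move=> p; apply/eqP; rewrite eq_sym -subr_eq0; apply/eqP; move: p; apply: zero_gen.
  rewrite sqdiff; clear -h3 h9 X1342; lra. }
have W00 : S i0 j0 i3 j1 = S i0 j0 i0 j2 by apply: eq_bigr => p _; rewrite W.
have W01 : S i0 j1 i3 j1 = S i0 j1 i0 j2 by apply: eq_bigr => p _; rewrite W.
have W10 : S i1 j0 i3 j1 = S i0 j2 i1 j0 by apply: eq_bigr => p _; rewrite W mulrC.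
have W12 : S i1 j2 i3 j1 = S i0 j2 i1 j2 by apply: eq_bigr => p _; rewrite W mulrC.
have W21 : S i2 j1 i3 j1 = S i0 j2 i2 j1 by apply: eq_bigr => p _; rewrite W mulrC.
have W22 : S i2 j2 i3 j1 = S i0 j2 i2 j2 by apply: eq_bigr => p _; rewrite W mulrC.
have W30 : S i3 j0 i3 j1 = S i0 j2 i3 j0 by apply: eq_bigr => p _; rewrite W mulrC.
have W41 : S i3 j1 i4 j1 = S i0 j2 i4 j1 by apply: eq_bigr => p _; rewrite W.
have F0_0 : S i0 j0 i0 j0 = 1 by clear -h1; lra.
have F0_1 : S i0 j0 i0 j1 = 0 by clear -h1 h2 h11; lra.
have F1_0 : S i0 j1 i0 j0 = 0 by rewrite Ssym.
have F0_2 : S i0 j0 i0 j2 = 0 by clear -h1 h3 h12; lra.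
have F2_0 : S i0 j2 i0 j0 = 0 by rewrite Ssym.
have F0_3 : S i0 j0 i1 j0 = 0 by clear -h1 h4 h13; lra.
have F3_0 : S i1 j0 i0 j0 = 0 by rewrite Ssym.
have F0_4 : S i0 j0 i1 j2 = 0 by clear -h1 h3 h4 h5 h8 h12 h13 h19 h21 h22 h27 h30 h43 W10; lra.
have F4_0 : S i1 j2 i0 j0 = 0 by rewrite Ssym.
have F0_5 : S i0 j0 i2 j1 = 0 by clear -h2 h11 h16 h32; lra.
have F5_0 : S i2 j1 i0 j0 = 0 by rewrite Ssym.
have F0_6 : S i0 j0 i2 j2 = 0 by clear -h3 h12 h20 h33; lra.
have F6_0 : S i2 j2 i0 j0 = 0 by rewrite Ssym.
have F0_7 : S i0 j0 i3 j0 = 0 by clear -h1 h8 h14; lra.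
have F7_0 : S i3 j0 i0 j0 = 0 by rewrite Ssym.
have F0_8 : S i0 j0 i4 j1 = 0 by clear -h2 h11 h18 h38; lra.
have F8_0 : S i4 j1 i0 j0 = 0 by rewrite Ssym.
have F1_1 : S i0 j1 i0 j1 = 1 by clear -h2; lra.
have F1_2 : S i0 j1 i0 j2 = 0 by clear -h2 h3 h15; lra.
have F2_1 : S i0 j2 i0 j1 = 0 by rewrite Ssym.
have F1_3 : S i0 j1 i1 j0 = 0 by clear -h1 h11 h13 h29; lra.
have F3_1 : S i1 j0 i0 j1 = 0 by rewrite Ssym.
have F1_4 : S i0 j1 i1 j2 = 0 by clear -h3 h15 h19 h31; lra.
have F4_1 : S i1 j2 i0 j1 = 0 by rewrite Ssym.
have F1_5 : S i0 j1 i2 j1 = 0 by clear -h2 h6 h16; lra.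
have F5_1 : S i2 j1 i0 j1 = 0 by rewrite Ssym.
have F1_6 : S i0 j1 i2 j2 = 0 by clear -h2 h3 h6 h7 h9 h15 h16 h20 h24 h25 h34 W21; lra.
have F6_1 : S i2 j2 i0 j1 = 0 by rewrite Ssym.
have F1_7 : S i0 j1 i3 j0 = 0 by clear -h1 h2 h3 h8 h9 h11 h12 h14 h17 h27 h35 W00; lra.
have F7_1 : S i3 j0 i0 j1 = 0 by rewrite Ssym.
have F1_8 : S i0 j1 i4 j1 = 0 by clear -h2 h10 h18; lra.
have F8_1 : S i4 j1 i0 j1 = 0 by rewrite Ssym.
have F2_2 : S i0 j2 i0 j2 = 1 by clear -h3; lra.
have F2_3 : S i0 j2 i1 j0 = 0 by clear -h8 h22 h27 h43 W10; lra.
have F3_2 : S i1 j0 i0 j2 = 0 by rewrite Ssym.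
have F2_4 : S i0 j2 i1 j2 = 0 by clear -h3 h5 h19; lra.
have F4_2 : S i1 j2 i0 j2 = 0 by rewrite Ssym.
have F2_5 : S i0 j2 i2 j1 = 0 by clear -h6 h9 h25 W21; lra.
have F5_2 : S i2 j1 i0 j2 = 0 by rewrite Ssym.
have F2_6 : S i0 j2 i2 j2 = 0 by clear -h3 h7 h20; lra.
have F6_2 : S i2 j2 i0 j2 = 0 by rewrite Ssym.
have F2_7 : S i0 j2 i3 j0 = 0 by clear -h1 h12 h14 h36; lra.
have F7_2 : S i3 j0 i0 j2 = 0 by rewrite Ssym.
have F2_8 : S i0 j2 i4 j1 = 0 by clear -h2 h15 h18 h39; lra.
have F8_2 : S i4 j1 i0 j2 = 0 by rewrite Ssym.
have F3_3 : S i1 j0 i1 j0 = 1 by clear -h4; lra.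
have F3_4 : S i1 j0 i1 j2 = 0 by clear -h4 h5 h21; lra.
have F4_3 : S i1 j2 i1 j0 = 0 by rewrite Ssym.
have F3_5 : S i1 j0 i2 j1 = 0 by clear -h4 h6 h40; lra.
have F5_3 : S i2 j1 i1 j0 = 0 by rewrite Ssym.
have F3_6 : S i1 j0 i2 j2 = 0 by clear -h5 h21 h23 h41; lra.
have F6_3 : S i2 j2 i1 j0 = 0 by rewrite Ssym.
have F3_7 : S i1 j0 i3 j0 = 0 by clear -h4 h8 h22; lra.
have F7_3 : S i3 j0 i1 j0 = 0 by rewrite Ssym.
have F3_8 : S i1 j0 i4 j1 = 0 by clear -h4 h10 h46; lra.
have F8_3 : S i4 j1 i1 j0 = 0 by rewrite Ssym.
have F4_4 : S i1 j2 i1 j2 = 1 by clear -h5; lra.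
have F4_5 : S i1 j2 i2 j1 = 0 by clear -h7 h23 h24 h42; lra.
have F5_4 : S i2 j1 i1 j2 = 0 by rewrite Ssym.
have F4_6 : S i1 j2 i2 j2 = 0 by clear -h5 h7 h23; lra.
have F6_4 : S i2 j2 i1 j2 = 0 by rewrite Ssym.
have F4_7 : S i1 j2 i3 j0 = 0 by clear -h4 h21 h22 h44; lra.
have F7_4 : S i3 j0 i1 j2 = 0 by rewrite Ssym.
have F4_8 : S i1 j2 i4 j1 = 0 by clear -h5 h10 h47; lra.
have F8_4 : S i4 j1 i1 j2 = 0 by rewrite Ssym.
have F5_5 : S i2 j1 i2 j1 = 1 by clear -h6; lra.
have F5_6 : S i2 j1 i2 j2 = 0 by clear -h6 h7 h24; lra.
have F6_5 : S i2 j2 i2 j1 = 0 by rewrite Ssym.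
have F5_7 : S i2 j1 i3 j0 = 0 by clear -h9 h25 h27 h48; lra.
have F7_5 : S i3 j0 i2 j1 = 0 by rewrite Ssym.
have F5_8 : S i2 j1 i4 j1 = 0 by clear -h6 h10 h26; lra.
have F8_5 : S i4 j1 i2 j1 = 0 by rewrite Ssym.
have F6_6 : S i2 j2 i2 j2 = 1 by clear -h7; lra.
have F6_7 : S i2 j2 i3 j0 = 0 by clear -h7 h8 h49; lra.
have F7_6 : S i3 j0 i2 j2 = 0 by rewrite Ssym.
have F6_8 : S i2 j2 i4 j1 = 0 by clear -h6 h24 h26 h51; lra.
have F8_6 : S i4 j1 i2 j2 = 0 by rewrite Ssym.
have F7_7 : S i3 j0 i3 j0 = 1 by clear -h8; lra.
have F7_8 : S i3 j0 i4 j1 = 0 by clear -h9 h27 h28 h52; lra.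
have F8_7 : S i4 j1 i3 j0 = 0 by rewrite Ssym.
have F8_8 : S i4 j1 i4 j1 = 1 by clear -h10; lra.
have G : forall a b : 'I_9, S (nth i0 RI a) (nth j0 CJ a) (nth i0 RI b) (nth j0 CJ b) = (a == b)%:R.
{ move=> [a Ha] [b Hb].
  case: a Ha => [|[|[|[|[|[|[|[|[|a]]]]]]]]] Ha //; case: b Hb => [|[|[|[|[|[|[|[|[|b]]]]]]]]] Hb //=.
  all: by rewrite ?F0_0 ?F0_1 ?F1_0 ?F0_2 ?F2_0 ?F0_3 ?F3_0 ?F0_4 ?F4_0 ?F0_5 ?F5_0 ?F0_6 ?F6_0 ?F0_7 ?F7_0 ?F0_8 ?F8_0 ?F1_1 ?F1_2 ?F2_1 ?F1_3 ?F3_1 ?F1_4 ?F4_1 ?F1_5 ?F5_1 ?F1_6 ?F6_1 ?F1_7 ?F7_1 ?F1_8 ?F8_1 ?F2_2 ?F2_3 ?F3_2 ?F2_4 ?F4_2 ?F2_5 ?F5_2 ?F2_6 ?F6_2 ?F2_7 ?F7_2 ?F2_8 ?F8_2 ?F3_3 ?F3_4 ?F4_3 ?F3_5 ?F5_3 ?F3_6 ?F6_3 ?F3_7 ?F7_3 ?F3_8 ?F8_3 ?F4_4 ?F4_5 ?F5_4 ?F4_6 ?F6_4 ?F4_7 ?F7_4 ?F4_8 ?F8_4 ?F5_5 ?F5_6 ?F6_5 ?F5_7 ?F7_5 ?F5_8 ?F8_5 ?F6_6 ?F6_7 ?F7_6 ?F6_8 ?F8_6 ?F7_7 ?F7_8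 ?F8_7 ?F8_8. }

pose M := \matrix_(a < 9, p < r) c p (nth i0 RI a) (nth j0 CJ a).
have MM : M *m M^T = 1%:M.
{ apply/matrixP => a b; rewrite !mxE -G /S; apply: eq_bigr => p _; rewrite !mxE. done. }
have := mxrankM_maxl M M^T; rewrite MM mxrank1 => h.
exact: leq_trans h (rank_leq_col M).
Qed.
End Low.

Definition tbl : seq (seq R) := [:: [::1;0;0;0;0;0;0;0;0;0;0;0;0;0;0]; [::0;1;0;0;0;0;0;0;0;0;0;0;0;0;0]; [::0;0;0;1;0;0;0;0;0;0;0;0;0;0;0]; [::0;0;0;0;0;1;0;0;0;0;0;0;0;0;0]; [::0;0;0;0;0;0;0;1;0;0;0;0;0;0;0]; [::0;0;0;0;0;0;0;0;1;0;0;0;0;0;0]; [::0;0;0;0;0;0;0;0;0;1;0;0;0;0;0]; [::0;0;0;0;0;0;0;0;0;0;0;0;0;1;0]; [::0;0;1;0;0;0;0;0;0;0;1;0;0;0;0]].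
Definition c9 (p : 'I_9) : 'M[R]_(5,3) := \matrix_(i < 5, j < 3) nth 0 (nth [::] tbl p) (i * 3 + j).

Lemma sos9 : sos_with 9 P53.
Proof.
exists c9 => x y; rewrite P53E !big_ord_recl big_ord0 !bilinE !mxE /=. ring.
Qed.

Lemma biquad_sos r (c : 'I_r -> 'M[R]_(5,3)) x y :
  biquad (fun i j k l => \sum_p c p i j * c p k l) x y = \sum_p (bilin (c p) x y)^+2.
Proof.
rewrite /biquad /bilin; symmetry.
transitivity (\sum_(p < r) \sum_(i < 5) \sum_(j < 3) \sum_(k < 5) \sum_(l < 3)
   (c p i j * x i * y j) * (c p k l * x k * y l)).
{ apply: eq_bigr => p _; rewrite expr2 mulr_suml; apply: eq_bigr => i _.
  rewrite mulr_suml; apply: eq_bigr => j _; rewrite mulr_sumr; apply: eq_bigr => k _.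
  by rewrite mulr_sumr. }
rewrite exchange_big; apply: eq_bigr => i _.
rewrite exchange_big; apply: eq_bigr => j _.
rewrite exchange_big; apply: eq_bigr => k _.
rewrite exchange_big; apply: eq_bigr => l _.
rewrite !mulr_suml; apply: eq_bigr => p _; ring.
Qed.

Theorem corollary4p2 : BSR_ge 5 3 9 /\ sos_rank P53 9.
Proof.
have low : forall r, (r < 9)%N -> ~ sos_with r P53.
{ move=> r hr [c H]; have := @lower r c H; by rewrite leqNgt hr. }
split; last by split; [exact: sos9 | exact: low].
have [c H] := sos9.
exists (fun i j k l => \sum_p c p i j * c p k l); split.
- exists 9, c => x y; exact: biquad_sos.
- move=> r hr [d Hd]; apply: (low r hr); exists d => x y.
  by rewrite H -biquad_sos; exact: Hd.
Qed.
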